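(* Fix $k\ge1$. Let $\mathcal T_k$ be the set of self-avoiding walks on $\mathbb Z^2$ (including the empty walk) with North, East and South unit steps, starting at $(0,0)$ and confined to the strip $0\le y\le k$. For $w\in\mathcal T_k$ let $h(w)$ (resp. $h_c(w)$) be the number of horizontal steps at height different from $0$ and $k$ (resp. at height $0$ or $k$), let $v(w)$ (resp. $v_c(w)$) be the number of vertical steps ending at height different from $0$ and $k$ (resp. ending at height $0$ or $k$), and let $f(w)$ be the height of the endpoint of $w$. Define $$T_k(s)=\sum_{w\in\mathcal T_k}x^{h(w)}y^{v(w)}a^{h_c(w)}b^{v_c(w)}s^{f(w)}=\sum_{i=0}^kT_{k,i}s^i,$$ where $T_{k,i}$ (a series in $x,y,a,b$) counts walks ending at height $i$, and let $\tilde T_k(s)=T_k(s)-T_{k,0}-s^kT_{k,k}$ (walks not ending at height $0$ or $k$). Then, with $\bar s=1/s$, $$\left(1-\frac x{1-ys}-\frac{xy\bar s}{1-y\bar s}\right)\tilde T_k(s)=\frac{ys-(ys)^k}{1-ys}-\frac{x(ys)^k}{1-ys}\tilde T_k(1/y)-\frac x{1-y\bar s}\tilde T_k(y)+aT_{k,0}\frac{ys-(ys)^k}{1-ys}+aT_{k,k}\frac{ys^{k-1}-y^k}{1-y\bar s},$$ $$T_{k,0}=1+bx\,y^{-1}\tilde T_k(y)+aT_{k,0}+ab\,y^{k-1}T_{k,k},$$ $$T_{k,k}=by^{k-1}+bxy^{k-1}\tilde T_k(1/y)+ab\,y^{k-1}T_{k,0}+aT_{k,k}.$$ *)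

(* Defs.v *)
From HB Require Import structures.
From mathcomp Require Import all_boot all_order all_algebra.
From mathcomp Require Import all_classical all_reals all_analysis.
Set Implicit Arguments. Unset Strict Implicit. Unset Printing Implicit Defensive.
Import Order.TTheory GRing.Theory Num.Theory numFieldNormedType.Exports.
Local Open Scope ring_scope.

Inductive step := N | E | S.

Definition move (p : int * int) (st : step) : int * int :=
  match st with
  | N => (p.1, p.2 + 1)
  | E => (p.1 + 1, p.2)
  | S => (p.1, p.2 - 1)
  end.

Fixpoint pts (p : int * int) (w : seq step) : seq (int * int) :=
  match w with
  | [::] => [::]
  | st :: w' => let q := move p st in q :: pts q w'
  end.

Definition origin : int * int := (0, 0).

Definition visited (w : seq step) : seq (int * int) := origin :: pts origin w.

Definition self_avoiding (w : seq step) : bool := uniq (visited w).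

Definition in_strip (k : nat) (w : seq step) : bool :=
  all (fun p : int * int => (0 <= p.2) && (p.2 <= k%:Z)) (visited w).

Definition in_Tk (k : nat) (w : seq step) : bool := self_avoiding w && in_strip k w.

Definition end_height (w : seq step) : int := (last origin (visited w)).2.

Definition contact (k : nat) (z : int) : bool := (z == 0) || (z == k%:Z).

Fixpoint wt {R : realType} (k : nat) (x y a b : R) (p : int * int) (w : seq step) : R :=
  match w with
  | [::] => 1
  | st :: w' =>
      let q := move p st in
      (match st with
       | E => if contact k p.2 then a else x
       | _ => if contact k q.2 then b else y
       end) * wt k x y a b q w'
  end.

Fixpoint all_seqs (n : nat) : seq (seq step) :=
  match n with
  | 0 => [:: [::]]
  | n'.+1 => flatten [seq [:: N :: w; E :: w; S :: w] | w <- all_seqs n']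
  end.

Definition Tki_len {R : realType} (k i : nat) (x y a b : R) (n : nat) : R :=
  \sum_(w <- all_seqs n | in_Tk k w && (end_height w == i%:Z)) wt k x y a b origin w.

Definition Tki {R : realType} (k i : nat) (x y a b : R) : R :=
  limn (series (Tki_len k i x y a b : R^nat) : R^nat).

Definition Tk {R : realType} (k : nat) (x y a b s : R) : R :=
  \sum_(i < k.+1) Tki k i x y a b * s ^+ i.

Definition Ttilde {R : realType} (k : nat) (x y a b s : R) : R :=
  Tk k x y a b s - Tki k 0 x y a b - s ^+ k * Tki k k x y a b.

(* Main.v *)
Require Import Defs.
From HB Require Import structures.
From mathcomp Require Import all_boot all_order all_algebra.
From mathcomp Require Import all_classical all_reals all_analysis.
From mathcomp Require Import zify ring lra.
Import Order.TTheory GRing.Theory Num.Theory.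
Local Open Scope ring_scope.


Definition step2nat (s : step) : nat := match s with N => 0 | E => 1 | S => 2 end.
Definition nat2step (n : nat) : step := match n with 0 => N | 1 => E | _ => S end.
Lemma step2natK : cancel step2nat nat2step. Proof. by case. Qed.
HB.instance Definition _ := Equality.copy step (can_type step2natK).

Lemma pts_rcons p w st :
  pts p (rcons w st) = rcons (pts p w) (move (last p (pts p w)) st).
Proof. by elim: w p => [|s w IH] p //=; rewrite IH. Qed.

Definition endp (w : seq step) := last origin (visited w).

Lemma visited_rcons w st :
  visited (rcons w st) = rcons (visited w) (move (endp w) st).
Proof. by rewrite /visited /endp /= pts_rcons. Qed.

Lemma endp_rcons w st : endp (rcons w st) = move (endp w) st.
Proof. by rewrite {1}/endp visited_rcons last_rcons. Qed.

Lemma mem_endp w : endp w \in visited w.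
Proof. rewrite /endp /visited /=; exact: mem_last. Qed.

Definition bad (st l : step) : bool :=
  match st, l with N, S => true | S, N => true | _, _ => false end.

Lemma walk_inv w : uniq (visited w) -> forall z, z \in visited w -> z != endp w ->
  (z.1 < (endp w).1) || ((z.1 == (endp w).1) &&
     (match last E w with N => z.2 < (endp w).2 | S => (endp w).2 < z.2 | E => false end)).
Proof.
elim/last_ind: w => [|w st IH].
  by move=> _ z; rewrite /visited /endp /= inE => /eqP ->; rewrite eqxx.
rewrite visited_rcons rcons_uniq => /andP[nin U] z.
rewrite endp_rcons last_rcons mem_rcons inE => /orP[/eqP->|zin]; first by rewrite eqxx.
move=> _.
have [ze|zne] := eqVneq z (endp w).
  rewrite ze; case: st {nin}; case: (endp w) => [e1 e2] /=; rewrite ?eqxx; lia.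
have := IH U z zin zne.
case: st nin => nin /=.
- case/orP=> [h|/andP[/eqP h1]]; first by rewrite h.
  move: nin h1; case: (lastP w) => [|w0 s0]; first by [].
  rewrite last_rcons endp_rcons => nin h1.
  case: s0 nin h1 => nin h1 //.
    move=> h2; move: h1 h2; case: (endp w0) => ? ? /=; lia.
  exfalso; move/negP: nin; apply.
  rewrite visited_rcons mem_rcons inE; apply/orP; right.
  have -> : move (move (endp w0) S) N = endp w0 by case: (endp w0) => ? ? /=; rewrite subrK.
  exact: mem_endp.
- by case/orP=> [h|/andP[/eqP h1 _]]; apply/orP; left; rewrite /= ?h1; lia.
- case/orP=> [h|/andP[/eqP h1]]; first by rewrite h.
  move: nin h1; case: (lastP w) => [|w0 s0]; first by [].
  rewrite last_rcons endp_rcons => nin h1.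
  case: s0 nin h1 => nin h1 //.
    exfalso; move/negP: nin; apply.
    rewrite visited_rcons mem_rcons inE; apply/orP; right.
    have -> : move (move (endp w0) N) S = endp w0 by case: (endp w0) => ? ? /=; rewrite addrK.
    exact: mem_endp.
  move=> h2; move: h1 h2; case: (endp w0) => ? ? /=; lia.
Qed.

Set Implicit Arguments. Unset Strict Implicit.

Lemma memb w st : uniq (visited w) ->
  (move (endp w) st \in visited w) = bad st (last E w).
Proof.
move=> U; apply/idP/idP.
  move=> m; have ne : move (endp w) st != endp w.
    by case: st {m}; case: (endp w) => e1 e2; rewrite /move /= xpair_eqE /=; apply/negP; lia.
  have := @walk_inv w U _ m ne; case: st {m ne} => /=; case: (last E w) => //;
  case: (endp w) => ? ? /=; lia.
case: (lastP w) => [|w0 s0]; first by case: st.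
rewrite last_rcons endp_rcons visited_rcons mem_rcons inE => h; apply/orP; right.
case: st s0 h => -[] //= _.
  by rewrite subrK -surjective_pairing mem_endp.
by rewrite addrK -surjective_pairing mem_endp.
Qed.

Definition okh (k : nat) (p : int * int) : bool := (0 <= p.2) && (p.2 <= k%:Z).

Lemma in_Tk_rcons k w st : in_Tk k (rcons w st) =
  [&& in_Tk k w, ~~ bad st (last E w) & okh k (move (endp w) st)].
Proof.
rewrite /in_Tk /self_avoiding /in_strip visited_rcons rcons_uniq all_rcons.
case U: (uniq (visited w)); last by rewrite andbF.
rewrite memb // /okh; by case: (bad _ _); case: (all _ _); case: (_ <= _ <= _).
Qed.

Lemma okh_endp k w : in_Tk k w -> okh k (endp w).
Proof. by case/andP=> _ /allP; apply; exact: mem_endp. Qed.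

Definition sw {R : realType} (k : nat) (x y a b : R) (e : int * int) (st : step) : R :=
  match st with
  | E => if contact k e.2 then a else x
  | _ => if contact k (move e st).2 then b else y
  end.

Lemma wt_rcons {R : realType} k (x y a b : R) p w st :
  wt k x y a b p (rcons w st) = wt k x y a b p w * sw k x y a b (last p (pts p w)) st.
Proof.
elim: w p => [|s w IH] p /=; first by rewrite mul1r mulr1; case: st.
by rewrite IH mulrA.
Qed.

Lemma wt_rcons0 {R : realType} k (x y a b : R) w st :
  wt k x y a b origin (rcons w st) = wt k x y a b origin w * sw k x y a b (endp w) st.
Proof. by rewrite wt_rcons. Qed.

Lemma big_all_seqsS {R : realType} n (G : seq step -> R) :
  \sum_(v <- all_seqs n.+1) G v =
  \sum_(w <- all_seqs n) (G (rcons w N) + G (rcons w E) + G (rcons w S)).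
Proof.
elim: n G => [|n IH] G.
  by rewrite /= !big_cons !big_nil /= !addr0 addrA.
rewrite [in LHS]/= big_flatten big_map /=.
have -> : \sum_(j <- all_seqs n.+1) \sum_(i <- [:: N :: j; E :: j; S :: j]) G i
   = \sum_(j <- all_seqs n.+1) (G (N :: j) + G (E :: j) + G (S :: j)).
  by apply: eq_bigr => j _; rewrite !big_cons big_nil addr0 addrA.
rewrite (IH (fun j => G (N :: j) + G (E :: j) + G (S :: j))).
rewrite [in RHS]/= big_flatten big_map /=.
apply: eq_bigr => j _; rewrite !big_cons big_nil /=.
rewrite !addr0; ring.
Qed.

Lemma all_seqs_size n w : w \in all_seqs n -> size w = n.
Proof.
elim: n w => [|n IH] w /=; first by rewrite inE => /eqP->.
case/flatten_mapP => v /IH <-; rewrite !inE => /or3P[] /eqP-> //.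
Qed.

Unset Implicit Arguments. Set Strict Implicit.

Section Rec.
Variables (R : realType) (k : nat) (x y a b : R).

Definition tw (i : nat) (l : step) (w : seq step) : R :=
  if [&& in_Tk k w, (endp w).2 == i%:Z & last E w == l] then wt k x y a b origin w else 0.
Definition Q i l n := \sum_(w <- all_seqs n) tw i l w.
Definition eco (i : nat) : R := if contact k i%:Z then a else x.
Definition cco (i : nat) : R := if contact k i%:Z then b else y.

Lemma Tki_len_split i n : Tki_len k i x y a b n = Q i N n + Q i E n + Q i S n.
Proof.
rewrite /Tki_len big_mkcond /Q -!big_split /=; apply: eq_bigr => w _.
rewrite /tw /end_height -/(endp w).
case: (in_Tk k w) => //=; last by rewrite !addr0.
case: ((endp w).2 == i%:Z) => //=; last by rewrite !addr0.
by case: (last E w) => /=; rewrite ?addr0 ?add0r.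
Qed.

Lemma QE0 i : Q i E 0 = if i == 0%N then 1 else 0.
Proof.
rewrite /Q /= big_cons big_nil addr0 /tw /= /in_Tk /self_avoiding /in_strip /=.
by case: i => [|i] //=; rewrite lerz0 /= ler0z.
Qed.

Lemma QN0 i : Q i N 0 = 0.
Proof. by rewrite /Q /= big_cons big_nil addr0 /tw /= andbF. Qed.
Lemma QS0 i : Q i S 0 = 0.
Proof. by rewrite /Q /= big_cons big_nil addr0 /tw /= andbF. Qed.

Lemma QES i n : Q i E n.+1 = eco i * Tki_len k i x y a b n.
Proof.
rewrite /Q big_all_seqsS /Tki_len [in RHS]big_mkcond [in RHS]mulr_sumr; apply: eq_bigr => w _.
rewrite /tw !endp_rcons !last_rcons !in_Tk_rcons !wt_rcons0 /end_height -/(endp w) /=.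
rewrite !andbF addr0 add0r.
case T: (in_Tk k w) => /=; last by rewrite mulr0.
have := okh_endp T; rewrite /eco /sw.
case: (endp w) => e1 e2 /= O; rewrite /okh /= in O *; rewrite O eqxx andbT /=.
case: eqP => [->|_]; last by rewrite mulr0.
by rewrite mulrC.
Qed.

Lemma eqS_int (e2 : int) (j : nat) : (e2 + 1 == j.+1%:Z) = (e2 == j%:Z).
Proof. by apply/eqP/eqP; lia. Qed.
Lemma eqP_int (e2 : int) (j : nat) : (e2 - 1 == j%:Z) = (e2 == j.+1%:Z).
Proof. by apply/eqP/eqP; lia. Qed.

Lemma QNS j n : (j < k)%N -> Q j.+1 N n.+1 = cco j.+1 * (Q j E n + Q j N n).
Proof.
move=> jk.
rewrite /Q big_all_seqsS -big_split /= mulr_sumr; apply: eq_bigr => w _.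
rewrite /tw !endp_rcons !last_rcons !in_Tk_rcons !wt_rcons0 /=.
rewrite !andbF !addr0.
case T: (in_Tk k w) => /=; last by rewrite addr0 mulr0.
have := okh_endp T; rewrite /okh /cco /sw.
case: (endp w) => e1 e2 /= O; rewrite eqS_int.
case: (e2 =P j%:Z) => [->|_] /=; last by rewrite !andbF addr0 mulr0.
have -> : (j%:Z + 1 <= k%:Z) by lia.
have -> : (j%:Z + 1) = j.+1%:Z by lia.
by case: (last E w) => /=; rewrite ?add0r ?addr0 ?mulr0 // mulrC.
Qed.

Lemma QN0S n : Q 0 N n.+1 = 0.
Proof.
rewrite /Q big_all_seqsS big1_seq // => w _.
rewrite /tw !endp_rcons !last_rcons !in_Tk_rcons !wt_rcons0 /=.
rewrite !andbF !addr0.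
case T: (in_Tk k w) => //=.
have := okh_endp T; rewrite /okh.
case: (endp w) => e1 e2 /= O.
rewrite (_ : (e2 + 1 == 0) = false); last by apply/eqP; lia.
by rewrite /= andbF.
Qed.

Lemma QSS j n : (j < k)%N -> Q j S n.+1 = cco j * (Q j.+1 E n + Q j.+1 S n).
Proof.
move=> jk.
rewrite /Q big_all_seqsS -big_split /= mulr_sumr; apply: eq_bigr => w _.
rewrite /tw !endp_rcons !last_rcons !in_Tk_rcons !wt_rcons0 /=.
rewrite !andbF !add0r.
case T: (in_Tk k w) => /=; last by rewrite addr0 mulr0.
have := okh_endp T; rewrite /okh /cco /sw.
case: (endp w) => e1 e2 /= O; rewrite eqP_int.
case: (e2 =P j.+1%:Z) => [->|_] /=; last by rewrite !andbF addr0 mulr0.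
have -> : (j.+1%:Z - 1 <= k%:Z) by lia.
have -> : (j.+1%:Z - 1) = j%:Z by lia.
by case: (last E w) => /=; rewrite ?add0r ?addr0 ?mulr0 // mulrC.
Qed.

Lemma QSkS n : Q k S n.+1 = 0.
Proof.
rewrite /Q big_all_seqsS big1_seq // => w _.
rewrite /tw !endp_rcons !last_rcons !in_Tk_rcons !wt_rcons0 /=.
rewrite !andbF !add0r.
case T: (in_Tk k w) => //=.
have := okh_endp T; rewrite /okh.
case: (endp w) => e1 e2 /= O.
rewrite (_ : (e2 - 1 == k%:Z) = false); last by apply/eqP; lia.
by rewrite /= andbF.
Qed.
End Rec.
Arguments Q {R}. Arguments tw {R}. Arguments eco {R}. Arguments cco {R}.

Section S45.
Import numFieldNormedType.Exports.
Local Open Scope classical_set_scope.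

Lemma lim_shift (R : realType) (u : R^nat) : cvgn (series u) ->
  limn (series u) = u 0%N + limn (series (fun n => u n.+1)).
Proof.
move=> cu.
have h : series (fun n => u n.+1) = (fun n => series u n.+1 - u 0%N).
  by apply/funext => n; rewrite /series /= big_nat_recl //= addrC addKr.
have c2 : series (fun n => u n.+1) @ \oo --> limn (series u) - u 0%N.
  rewrite h; apply: cvgB; last exact: cvg_cst.
  have := cu; rewrite -(cvg_shiftS (series u)); exact.
by rewrite (cvg_lim _ c2) // addrC subrK.
Qed.

Section Bounds.
Variables (R : realType) (k : nat) (x y a b : R).
Hypotheses (hx : 0 < x < 4^-1) (hy : 0 < y < 4^-1) (ha : 0 < a < 4^-1) (hb : 0 < b < 4^-1).

Lemma wt_bound p w : 0 <= wt k x y a b p w <= 4^-1 ^+ size w.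
Proof.
elim: w p => [|st w IH] p /=; first by rewrite expr0 lexx ler01.
have hf : 0 <= (match st with
       | E => if contact k p.2 then a else x
       | _ => if contact k (move p st).2 then b else y
       end) <= 4^-1.
  move: hx hy ha hb => /andP[? ?] /andP[? ?] /andP[? ?] /andP[? ?].
  by case: st; case: (contact _ _); apply/andP; split; lra.
have [f1 f2] := andP hf.
have [h1 h2] := andP (IH (move p st)).
rewrite exprS; apply/andP; split; first exact: mulr_ge0.
by apply: ler_pM.
Qed.

Lemma sum_pow n : \sum_(w <- all_seqs n) (4^-1 : R) ^+ size w = (3 / 4) ^+ n.
Proof.
elim: n => [|n IH]; first by rewrite /= big_cons big_nil addr0 expr0.
rewrite big_all_seqsS exprS -IH mulr_sumr; apply: eq_bigr => w _.
rewrite !size_rcons exprS; field.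
by [].
Qed.

Lemma Q_bound i l n : 0 <= Q k x y a b i l n <= (3/4) ^+ n.
Proof.
rewrite -sum_pow; apply/andP; split.
  by apply: sumr_ge0 => w _; rewrite /tw; case: ifP => // _; case/andP: (wt_bound origin w).
apply: ler_sum => w _; rewrite /tw; case: ifP => _; first by case/andP: (wt_bound origin w).
by rewrite exprn_ge0 // invr_ge0.
Qed.

Lemma Q_cvg i l : cvgn (series (Q k x y a b i l)).
Proof.
apply: (@series_le_cvg R _ (geometric 1 (3/4))).
- by move=> n; case/andP: (Q_bound i l n).
- by move=> n; rewrite /geometric /= mul1r exprn_ge0 //; lra.
- by move=> n; rewrite /geometric /= mul1r; case/andP: (Q_bound i l n).
- by apply: is_cvg_geometric_series; rewrite ger0_norm; lra.
Qed.
End Bounds.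

Section Lims.
Variables (R : realType) (k : nat) (x y a b : R).
Hypotheses (hx : 0 < x < 4^-1) (hy : 0 < y < 4^-1) (ha : 0 < a < 4^-1) (hb : 0 < b < 4^-1).

Let Qc i l := @Q_cvg R k x y a b hx hy ha hb i l.

Definition Fv i := limn (series (Q k x y a b i E)).
Definition Uv i := limn (series (Q k x y a b i N)).
Definition Dv i := limn (series (Q k x y a b i S)).

Lemma Tl_eq i : (Tki_len k i x y a b : R^nat) =
  Q k x y a b i N + Q k x y a b i E + Q k x y a b i S.
Proof. by apply/funext => n; rewrite Tki_len_split. Qed.

Lemma Tl_cvg i : cvgn (series (Tki_len k i x y a b : R^nat)).
Proof. by rewrite Tl_eq; apply: is_cvg_seriesD; [apply: is_cvg_seriesD|]; apply: Qc. Qed.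

Lemma L1 i : Tki k i x y a b = Fv i + Uv i + Dv i.
Proof.
rewrite /Tki Tl_eq lim_seriesD; first last.
- exact: Qc.
- by apply: is_cvg_seriesD; apply: Qc.
rewrite lim_seriesD ?Qc //.
by rewrite /Fv /Uv /Dv; ring.
Qed.

Lemma L2 i : Fv i = (if i == 0%N then 1 else 0) + eco k x a i * Tki k i x y a b.
Proof.
rewrite /Fv lim_shift ?Qc // QE0.
have -> : (fun n => Q k x y a b i E n.+1) = eco k x a i *: (Tki_len k i x y a b : R^nat).
  by apply/funext => n; rewrite QES.
rewrite lim_seriesZ; last exact: Tl_cvg. rewrite /Tki. exact: erefl.

Qed.

Lemma L3 : Uv 0 = 0.
Proof.
rewrite /Uv lim_shift ?Qc // QN0.
have -> : (fun n => Q k x y a b 0 N n.+1) = (0 : R) *: (Q k x y a b 0 N : R^nat).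
  by apply/funext => n; rewrite QN0S /= scale0r.
by rewrite lim_seriesZ ?Qc // scale0r add0r.
Qed.

Lemma L4 j : (j < k)%N -> Uv j.+1 = cco k y b j.+1 * (Fv j + Uv j).
Proof.
move=> jk; rewrite /Uv lim_shift ?Qc // QN0.
have -> : (fun n => Q k x y a b j.+1 N n.+1) =
   cco k y b j.+1 *: (Q k x y a b j E + Q k x y a b j N : R^nat).
  by apply/funext => n; rewrite QNS.
rewrite lim_seriesZ; last by apply: is_cvg_seriesD; apply: Qc.
rewrite lim_seriesD; [ | exact: Qc | exact: Qc].
rewrite add0r; exact: erefl.
Qed.

Lemma L5 : Dv k = 0.
Proof.
rewrite /Dv lim_shift ?Qc // QS0.
have -> : (fun n => Q k x y a b k S n.+1) = (0 : R) *: (Q k x y a b 0 N : R^nat).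
  by apply/funext => n; rewrite QSkS /= scale0r.
by rewrite lim_seriesZ ?Qc // scale0r add0r.
Qed.

Lemma L6 j : (j < k)%N -> Dv j = cco k y b j * (Fv j.+1 + Dv j.+1).
Proof.
move=> jk; rewrite /Dv lim_shift ?Qc // QS0.
have -> : (fun n => Q k x y a b j S n.+1) =
   cco k y b j *: (Q k x y a b j.+1 E + Q k x y a b j.+1 S : R^nat).
  by apply/funext => n; rewrite QSS.
rewrite lim_seriesZ; last by apply: is_cvg_seriesD; apply: Qc.
rewrite lim_seriesD; [ | exact: Qc | exact: Qc].
rewrite add0r; exact: erefl.
Qed.
End Lims.

End S45.

Section Alg.
Variables (R : realType) (n : nat) (x y a b : R) (T F U D : nat -> R).
Let k := n.+1.
Hypotheses (HT : forall i, T i = F i + U i + D i)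
  (HF : forall i, F i = (if i == 0%N then 1 else 0) + eco k x a i * T i)
  (HU0 : U 0%N = 0)
  (HU : forall j, (j < k)%N -> U j.+1 = cco k y b j.+1 * (F j + U j))
  (HDk : D k = 0)
  (HD : forall j, (j < k)%N -> D j = cco k y b j * (F j.+1 + D j.+1)).

Lemma eco_in i : (0 < i < k)%N -> eco k x a i = x.
Proof.
move=> h; rewrite /eco /contact.
rewrite (_ : (i%:Z == 0) = false); last by apply/eqP; lia.
by rewrite (_ : (i%:Z == k%:Z) = false) //; apply/eqP; rewrite /k; lia.
Qed.
Lemma cco_in i : (0 < i < k)%N -> cco k y b i = y.
Proof.
move=> h; rewrite /cco /contact.
rewrite (_ : (i%:Z == 0) = false); last by apply/eqP; lia.
by rewrite (_ : (i%:Z == k%:Z) = false) //; apply/eqP; rewrite /k; lia.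
Qed.
Lemma eco0 : eco k x a 0 = a. Proof. by rewrite /eco /contact eqxx. Qed.
Lemma ecok : eco k x a k = a. Proof. by rewrite /eco /contact eqxx orbT. Qed.
Lemma cco0 : cco k y b 0 = b. Proof. by rewrite /cco /contact eqxx. Qed.
Lemma ccok : cco k y b k = b. Proof. by rewrite /cco /contact eqxx orbT. Qed.

Lemma F0 : F 0%N = 1 + a * T 0%N. Proof. by rewrite HF eco0. Qed.
Lemma Fk : F k = a * T k. Proof. by rewrite HF ecok add0r. Qed.
Lemma Fin i : (0 < i < k)%N -> F i = x * T i.
Proof. by move=> h; rewrite HF eco_in //; case: i h => // i _; rewrite add0r. Qed.

Lemma CV j : (j <= n)%N -> F j + U j = \sum_(0 <= i < j.+1) y ^+ (j - i) * F i.
Proof.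
elim: j => [|j IH] hj.
  by rewrite big_nat1 HU0 subnn expr0 mul1r addr0.
rewrite HU; last by rewrite /k; lia.
rewrite cco_in; last by rewrite /k; lia.
rewrite IH; last by lia.
rewrite [in RHS]big_nat_recr //= subnn expr0 mul1r [in RHS]addrC; congr (_ + _).
rewrite mulr_sumr; apply: eq_big_nat => i hi.
by rewrite mulrA -exprS subSn //; lia.
Qed.

Lemma CW r : (r <= n)%N ->
  F (k - r)%N + D (k - r)%N = \sum_(0 <= t < r.+1) y ^+ t * F (k - r + t)%N.
Proof.
elim: r => [|r IH] hr.
  by rewrite big_nat1 subn0 addn0 HDk expr0 mul1r addr0.
have e1 : (k - r.+1).+1 = (k - r)%N by rewrite /k; lia.
rewrite (HD (k - r.+1)%N); last by rewrite /k; lia.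
rewrite cco_in; last by rewrite /k; lia.
rewrite e1 IH; last by lia.
rewrite [in RHS]big_nat_recl //= expr0 mul1r addn0; congr (_ + _).
rewrite mulr_sumr; apply: eq_big_nat => i hi.
rewrite mulrA -exprS; congr (_ * F _); rewrite /k; lia.
Qed.

Definition P (s : R) := \sum_(0 <= j < n) T j.+1 * s ^+ j.+1.

Lemma Vn (hy : y != 0) : F n + U n = y ^+ n * (F 0%N + x * P y^-1).
Proof.
rewrite CV // big_nat_recl // subn0 mulrDr; congr (_ + _).
rewrite /P !mulr_sumr; apply: eq_big_nat => i hi.
rewrite Fin; last by rewrite /k; lia.
rewrite exprVn exprB //; last by rewrite unitfE.
by ring.
Qed.

Lemma Wn : y * (F 1%N + D 1%N) = x * P y + a * y ^+ k * T k.
Proof.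
have := @CW n (leqnn n); rewrite (_ : (k - n)%N = 1%N); last by rewrite /k; lia.
move=> ->.
rewrite big_nat_recr //= mulrDr; congr (_ + _).
  rewrite /P !mulr_sumr; apply: eq_big_nat => i hi.
  rewrite add1n Fin; last by rewrite /k; lia.
  by rewrite exprS; ring.
by rewrite add1n Fk /k exprS; ring.
Qed.

Lemma Tt_P s : \sum_(i < n.+2) T i * s ^+ i - T 0%N - s ^+ k * T k = P s.
Proof.
rewrite -(big_mkord xpredT (fun i => T i * s ^+ i)) big_nat_recl // big_nat_recr //=.
by rewrite expr0 mulr1 /P /k; ring.
Qed.

Lemma US s : \sum_(0 <= j < n) U j.+1 * s ^+ j.+1 =
  y * s * (F 0%N + x * P s + \sum_(0 <= j < n) U j.+1 * s ^+ j.+1 - (F n + U n) * s ^+ n).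
Proof.
have h1 : \sum_(0 <= j < n) U j.+1 * s ^+ j.+1 = y * s * \sum_(0 <= j < n) (F j + U j) * s ^+ j.
  rewrite mulr_sumr; apply: eq_big_nat => j hj.
  rewrite HU; last by rewrite /k; lia.
  rewrite cco_in; last by rewrite /k; lia.
  by rewrite exprS; ring.
have h2 : \sum_(0 <= j < n.+1) (F j + U j) * s ^+ j =
    F 0%N + x * P s + \sum_(0 <= j < n) U j.+1 * s ^+ j.+1.
  rewrite big_nat_recl // expr0 mulr1 HU0 addr0 /P mulr_sumr -addrA -big_split /=.
  congr (_ + _); apply: eq_big_nat => j hj.
  by rewrite Fin; [ring | rewrite /k; lia].
have h4 : \sum_(0 <= j < n) (F j + U j) * s ^+ j =
    F 0%N + x * P s + \sum_(0 <= j < n) U j.+1 * s ^+ j.+1 - (F n + U n) * s ^+ n.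
  by rewrite -h2 big_nat_recr //= addrK.
by rewrite {1}h1 h4.
Qed.

Lemma DS s : s * \sum_(0 <= j < n) D j.+1 * s ^+ j.+1 =
  y * (x * P s + \sum_(0 <= j < n) D j.+1 * s ^+ j.+1 + a * T k * s ^+ k)
  - (x * P y + a * y ^+ k * T k) * s.
Proof.
have h1 : s * \sum_(0 <= j < n) D j.+1 * s ^+ j.+1 =
    y * \sum_(0 <= j < n) (F j.+2 + D j.+2) * s ^+ j.+2.
  rewrite !mulr_sumr; apply: eq_big_nat => j hj.
  rewrite HD; last by rewrite /k; lia.
  rewrite cco_in; last by rewrite /k; lia.
  by rewrite [s ^+ j.+2]exprS; ring.
have h4 : \sum_(0 <= j < n) (F j.+1 + D j.+1) * s ^+ j.+1 =
    x * P s + \sum_(0 <= j < n) D j.+1 * s ^+ j.+1.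
  rewrite /P mulr_sumr -big_split /=; apply: eq_big_nat => j hj.
  by rewrite Fin; [ring | rewrite /k; lia].
have h5 : \sum_(0 <= j < n) (F j.+2 + D j.+2) * s ^+ j.+2 =
    \sum_(0 <= j < n.+1) (F j.+1 + D j.+1) * s ^+ j.+1 - (F 1%N + D 1%N) * s.
  by rewrite [in RHS]big_nat_recl //= expr1 addrAC subrr add0r.
rewrite h1 h5 big_nat_recr //= h4 HDk Fk -Wn /k; ring.
Qed.

Lemma main1 s (hs : s != 0) (hys : y * s != 1) (hysb : y * s^-1 != 1) (hy : y != 0) :
  (1 - x / (1 - y * s) - x * y * s^-1 / (1 - y * s^-1)) * P s
        = (y * s - (y * s) ^+ k) / (1 - y * s)
          - x * (y * s) ^+ k / (1 - y * s) * P y^-1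
          - x / (1 - y * s^-1) * P y
          + a * T 0%N * (y * s - (y * s) ^+ k) / (1 - y * s)
          + a * T k * (y * s ^+ k.-1 - y ^+ k) / (1 - y * s^-1).
Proof.
set Us := \sum_(0 <= j < n) U j.+1 * s ^+ j.+1.
set Ds := \sum_(0 <= j < n) D j.+1 * s ^+ j.+1.
have e3 : P s = x * P s + Us + Ds.
  rewrite /P /Us /Ds mulr_sumr -!big_split /=; apply: eq_big_nat => j hj.
  by rewrite {1}HT Fin; [ring | rewrite /k; lia].
have e1 := US s; rewrite -/Us Vn // F0 in e1.
have e2 := DS s; rewrite -/Ds in e2.
have d1 : 1 - y * s != 0 by rewrite subr_eq0 eq_sym.
have d2 : 1 - y * s^-1 != 0 by rewrite subr_eq0 eq_sym.
have d3 : s - y != 0.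
  apply: contra hysb => /eqP h; apply/eqP.
  have -> : y = s by apply/eqP; rewrite eq_sym -subr_eq0 h.
  by rewrite divff.
have z1 : P s - x * P s - Us - Ds = 0 by rewrite {1}e3; ring.
set A := y * s * (1 + a * T 0%N + x * P s - y ^+ n * (1 + a * T 0%N + x * P y^-1) * s ^+ n).
set B := y * (x * P s + a * T k * s ^+ k) - (x * P y + a * y ^+ k * T k) * s.
have z2 : Us - y * s * Us - A = 0 by rewrite {1}e1 /A; ring.
have z3 : s * Ds - y * Ds - B = 0 by rewrite e2 /B; ring.
have key : forall L M Z : R, L - M = Z -> Z = 0 -> L = M.
  by move=> L M Z h h0; apply/eqP; rewrite -subr_eq0 h h0.
apply: (key _ _ ((P s - x * P s - Us - Ds) + (Us - y * s * Us - A) / (1 - y * s)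
                 + (s * Ds - y * Ds - B) / (s - y))).
  rewrite /A /B /k /= !exprS exprMn; field.
  by rewrite d3 d1 hs.
by rewrite z1 z2 z3 !mul0r !addr0.
Qed.

Lemma main2 (hy : y != 0) :
  T 0%N = 1 + b * x * y^-1 * P y + a * T 0%N + a * b * y ^+ n * T k.
Proof.
have w : F 1%N + D 1%N = (x * P y + a * y ^+ k * T k) / y by rewrite -Wn; field.
rewrite {1}HT F0 HU0 HD // cco0 w /k exprS; by field.
Qed.

Lemma main3 (hy : y != 0) :
  T k = b * y ^+ n + b * x * y ^+ n * P y^-1 + a * b * y ^+ n * T 0%N + a * T k.
Proof.
rewrite {1}HT Fk HDk /k HU // -/k ccok Vn // F0; ring.
Qed.
End Alg.

Theorem lemma2p3 (R : realType) (k : nat) (hk : (1 <= k)%N)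
  (x y a b : R)
  (hx : 0 < x < 4^-1) (hy : 0 < y < 4^-1) (ha : 0 < a < 4^-1) (hb : 0 < b < 4^-1)
  (s : R) (hs : s != 0) (hys : y * s != 1) (hysb : y * s^-1 != 1) :
  let T0 := Tki k 0 x y a b in
  let TK := Tki k k x y a b in
  let Tt := Ttilde k x y a b in
  [/\ (1 - x / (1 - y * s) - x * y * s^-1 / (1 - y * s^-1)) * Tt s
        = (y * s - (y * s) ^+ k) / (1 - y * s)
          - x * (y * s) ^+ k / (1 - y * s) * Tt y^-1
          - x / (1 - y * s^-1) * Tt y
          + a * T0 * (y * s - (y * s) ^+ k) / (1 - y * s)
          + a * TK * (y * s ^+ k.-1 - y ^+ k) / (1 - y * s^-1),
      T0 = 1 + b * x * y^-1 * Tt y + a * T0 + a * b * y ^+ k.-1 * TK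
    & TK = b * y ^+ k.-1 + b * x * y ^+ k.-1 * Tt y^-1
           + a * b * y ^+ k.-1 * T0 + a * TK].
Proof.
case: k hk => [//|n] _ /=.
have hy0 : y != 0 by case/andP: hy => h _; rewrite gt_eqF.
have TtE : forall t, Ttilde n.+1 x y a b t = P R n (fun i => Tki n.+1 i x y a b) t.
  by move=> t; rewrite /Ttilde /Tk -Tt_P.
rewrite !TtE.
have H1 := @L1 R n.+1 x y a b hx hy ha hb.
have H2 := @L2 R n.+1 x y a b hx hy ha hb.
have H3 := @L3 R n.+1 x y a b hx hy ha hb.
have H4 := @L4 R n.+1 x y a b hx hy ha hb.
have H5 := @L5 R n.+1 x y a b hx hy ha hb.
have H6 := @L6 R n.+1 x y a b hx hy ha hb.
split.
- exact: (@main1 _ _ _ _ _ _ _ _ _ _ H1 H2 H3 H4 H5 H6 _ hs hys hysb hy0).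
- exact: (@main2 _ _ _ _ _ _ _ _ _ _ H1 H2 H3 H5 H6 hy0).
- exact: (@main3 _ _ _ _ _ _ _ _ _ _ H1 H2 H3 H4 H5 hy0).
Qed.
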